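(* Let $\mathbf{R}\in SO(3)$, $\theta\in(\theta^-,\theta^+)$ and $\mathbf{A}\in\mathbb{R}^{3\times2}$. Define $\mathbf{L}_1:=\mathbf{R}[\mathbf{v}(\theta)\otimes\tilde{\mathbf{e}}_1+\mathbf{u}(\theta)\otimes\tilde{\mathbf{e}}_2]$ and $\mathbf{L}_2:=\mathbf{R}[(\mathbf{v}(\theta)\cdot\mathbf{v}'(\theta))\mathbf{u}(\theta)\otimes\tilde{\mathbf{e}}_1-(\mathbf{u}(\theta)\cdot\mathbf{u}'(\theta))\mathbf{v}(\theta)\otimes\tilde{\mathbf{e}}_2]$. Then $\mathbf{L}_1:\mathbf{A}=0$ and $\mathbf{L}_2:\mathbf{A}=0$ if and only if there exist $\boldsymbol{\omega}\in\mathbb{R}^3$ and $\xi\in\mathbb{R}$ with $\mathbf{A}\tilde{\mathbf{e}}_1=\mathbf{R}[\boldsymbol{\omega}\times\mathbf{u}(\theta)+\xi\mathbf{u}'(\theta)]$ and $\mathbf{A}\tilde{\mathbf{e}}_2=\mathbf{R}[\boldsymbol{\omega}\times\mathbf{v}(\theta)+\xi\mathbf{v}'(\theta)]$. (Applied pointwise, this holds for fields $\mathbf{A}(\mathbf{x})$ with $\mathbf{R}=\mathbf{R}_{\mathrm{eff}}(\mathbf{x})$, $\theta=\theta(\mathbf{x})$.)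
   Context: $\mathbf{u},\mathbf{v}:(\theta^-,\theta^+)\to\mathbb{R}^3$ are the deformed lattice vectors $\mathbf{u}(\theta)=\mathbf{t}_1(\theta)-\mathbf{t}_3(\theta)$, $\mathbf{v}(\theta)=\mathbf{t}_2(\theta)-\mathbf{t}_4(\theta)$ of the analytic mechanism parameterization of a parallelogram origami cell (rigid folding preserving crease lengths, adjacent-crease angles and mountain-valley assignment); they are orthogonal to $\mathbf{e}_3$ with $\mathbf{e}_3\cdot(\mathbf{u}\times\mathbf{v})>0$, and $\mathbf{u}'(\theta)\cdot\mathbf{u}(\theta)\neq0$, $\mathbf{v}'(\theta)\cdot\mathbf{v}(\theta)\neq0$ on $(\theta^-,\theta^+)$; primes are $d/d\theta$. $\{\tilde{\mathbf{e}}_1,\tilde{\mathbf{e}}_2\}$ is the standard basis of $\mathbb{R}^2$; $\mathbf{A}:\mathbf{B}:=\mathrm{Tr}(\mathbf{A}^T\mathbf{B})$. *)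

(* Defs.v *)
From HB Require Import structures.
From mathcomp Require Import all_boot all_order all_algebra.
From mathcomp Require Import all_classical all_reals all_analysis.
Set Implicit Arguments. Unset Strict Implicit. Unset Printing Implicit Defensive.
Import Order.TTheory GRing.Theory Num.Theory.
Import numFieldNormedType.Exports.
Local Open Scope ring_scope.

Section Defs.
Variable R : realType.

Definition dotv (n : nat) (a b : 'cV[R]_n) : R := \sum_(i < n) a i 0 * b i 0.

Definition cross (a b : 'cV[R]_3) : 'cV[R]_3 :=
  \col_(i < 3)
    (if i == 0 :> nat then a 1 0 * b 2 0 - a 2 0 * b 1 0
     else if i == 1 :> nat then a 2 0 * b 0 0 - a 0 0 * b 2 0
     else a 0 0 * b 1 0 - a 1 0 * b 0 0).

(* e_3 in R^3 and the standard basis e~_1, e~_2 of R^2 (indices 0,1) *)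
Definition e3 : 'cV[R]_3 := delta_mx 2 0.
Definition et (i : 'I_2) : 'cV[R]_2 := delta_mx i 0.

Definition tens (m n : nat) (a : 'cV[R]_m) (b : 'cV[R]_n) : 'M[R]_(m, n) :=
  a *m b^T.

Definition frob (m n : nat) (A B : 'M[R]_(m, n)) : R := \tr (A^T *m B).

Definition is_SO3 (Q : 'M[R]_3) : Prop := Q^T *m Q = 1%:M /\ \det Q = 1.

(* lattice vectors u = t1 - t3, v = t2 - t4 (creases indexed 0..3) *)
Definition uvec (t : 'I_4 -> R -> 'cV[R]_3) (s : R) : 'cV[R]_3 :=
  t 0 s - t 2 s.
Definition vvec (t : 'I_4 -> R -> 'cV[R]_3) (s : R) : 'cV[R]_3 :=
  t 1 s - t 3 s.

Definition in_int (a b s : R) : Prop := a < s < b.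

(* The mechanism of the parallelogram origami cell on (thm, thp):
   crease vectors t_1..t_4 depending differentiably on theta, rigid folding
   (crease lengths and angles between adjacent creases preserved, i.e. the
   Gram entries |t_i|^2 and t_i . t_{i+1} are constant), together with the
   standing assumptions on u, v from the context. *)
Definition origami_mechanism (thm thp : R) (t : 'I_4 -> R -> 'cV[R]_3) : Prop :=
  [/\ thm < thp,
      (forall i s, in_int thm thp s -> derivable (t i) s 1),
      (forall i s1 s2, in_int thm thp s1 -> in_int thm thp s2 ->
          dotv (t i s1) (t i s1) = dotv (t i s2) (t i s2) /\
          dotv (t i s1) (t (ordS i) s1) = dotv (t i s2) (t (ordS i) s2)),
      (forall s, in_int thm thp s ->
          [/\ dotv (uvec t s) e3 = 0, dotv (vvec t s) e3 = 0 &
              0 < dotv e3 (cross (uvec t s) (vvec t s))]) &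
      (forall s, in_int thm thp s ->
          dotv (derive1 (uvec t) s) (uvec t s) != 0 /\
          dotv (derive1 (vvec t) s) (vvec t s) != 0)].

Definition L1 (Q : 'M[R]_3) (t : 'I_4 -> R -> 'cV[R]_3) (s : R) : 'M[R]_(3, 2) :=
  Q *m (tens (vvec t s) (et 0) + tens (uvec t s) (et 1)).

Definition L2 (Q : 'M[R]_3) (t : 'I_4 -> R -> 'cV[R]_3) (s : R) : 'M[R]_(3, 2) :=
  Q *m ((dotv (vvec t s) (derive1 (vvec t) s)) *: tens (uvec t s) (et 0)
        - (dotv (uvec t s) (derive1 (uvec t) s)) *: tens (vvec t s) (et 1)).

End Defs.

(* Main.v *)
Require Import Defs.
From HB Require Import structures.
From mathcomp Require Import all_boot all_order all_algebra.
From mathcomp Require Import all_classical all_reals all_analysis.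
From mathcomp Require Import ring lra.
Import Order.TTheory GRing.Theory Num.Theory.
Import numFieldNormedType.Exports.
Local Open Scope ring_scope.
Section S.
Variable R : realType.
Lemma sum3 (F : 'I_3 -> R) : \sum_(i<3) F i = F 0 + F 1 + F 2.
Proof. by rewrite !big_ord_recl big_ord0 addr0 addrA; congr (_ + F _ + F _); apply/val_inj. Qed.
Lemma dotvE (a b : 'cV[R]_3) : dotv a b = a 0 0 * b 0 0 + a 1 0 * b 1 0 + a 2 0 * b 2 0.
Proof. exact: sum3. Qed.
Lemma dotvC n (a b : 'cV[R]_n) : dotv a b = dotv b a.
Proof. by apply: eq_bigr => i _; rewrite mulrC. Qed.
Lemma dotvBl n (a b c : 'cV[R]_n) : dotv (a - b) c = dotv a c - dotv b c.
Proof. by rewrite /dotv -sumrB; apply: eq_bigr => i _; rewrite !mxE mulrBl. Qed.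
Lemma dotvBr n (a b c : 'cV[R]_n) : dotv c (a - b) = dotv c a - dotv c b.
Proof. by rewrite dotvC dotvBl !(dotvC _ c). Qed.
Lemma dot_e3 (x : 'cV[R]_3) : dotv x (e3 R) = x 2 0.
Proof. by rewrite dotvE /e3 !mxE /= !mulr0 mulr1 !add0r. Qed.
Lemma frob_tens (x : 'cV[R]_3) (B : 'M[R]_(3,2)) (i : 'I_2) :
  frob (tens x (et R i)) B = dotv x (B *m et R i).
Proof.
rewrite /frob /tens trmx_mul trmxK -mulmxA mxtrace_mulC /mxtrace big_ord1 -mulmxA mxE.
by apply: eq_bigr => j _; rewrite mxE.
Qed.
Lemma frobDl m n (M1 M2 B : 'M[R]_(m,n)) : frob (M1 + M2) B = frob M1 B + frob M2 B.
Proof. by rewrite /frob raddfD mulmxDl mxtraceD. Qed.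
Lemma frobBl m n (M1 M2 B : 'M[R]_(m,n)) : frob (M1 - M2) B = frob M1 B - frob M2 B.
Proof. by rewrite /frob raddfB mulmxBl raddfB. Qed.
Lemma frobZl m n c (M B : 'M[R]_(m,n)) : frob (c *: M) B = c * frob M B.
Proof. by rewrite /frob linearZ /= -scalemxAl mxtraceZ. Qed.
Lemma frob_mul m n (Q : 'M[R]_m) (M B : 'M[R]_(m,n)) : frob (Q *m M) B = frob M (Q^T *m B).
Proof. by rewrite /frob trmx_mul mulmxA. Qed.
Lemma o4 : [/\ ordS (0:'I_4) = 1, ordS (1:'I_4) = 2, ordS (2:'I_4) = 3 & ordS (3:'I_4) = 0].
Proof. by split; apply/val_inj. Qed.
Lemma core_R (u0 u1 v0 v1 s0 s1 s2 r0 r1 r2 a0 a1 a2 b0 b1 b2 : R) :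
 0 < u0*v1 - u1*v0 -> u0*s0+u1*s1 != 0 -> v0*r0+v1*r1 != 0 ->
 u0*r0+u1*r1+(v0*s0+v1*s1) = 0 ->
 v0*a0+v1*a1+(u0*b0+u1*b1) = 0 ->
 (v0*r0+v1*r1)*(u0*a0+u1*a1) - (u0*s0+u1*s1)*(v0*b0+v1*b1) = 0 ->
 exists w0 w1 w2 xi,
 [/\ a0 = w1*0 - w2*u1 + xi*s0, a1 = w2*u0 - w0*0 + xi*s1 & a2 = w0*u1 - w1*u0 + xi*s2] /\
     [/\ b0 = w1*0 - w2*v1 + xi*r0, b1 = w2*v0 - w0*0 + xi*r1 & b2 = w0*v1 - w1*v0 + xi*r2].
Proof.
move=> dpos uu0 vv0 F4 C1 C2.
have d0 : u0*v1 - u1*v0 != 0 by rewrite gt_eqF.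
have N0 : u0^+2 + u1^+2 != 0.
  apply/eqP => h.
  have hu0 : u0 = 0 by apply/eqP; rewrite -sqrf_eq0; apply/eqP; nra.
  have hu1 : u1 = 0 by apply/eqP; rewrite -sqrf_eq0; apply/eqP; nra.
  by move: dpos; rewrite hu0 hu1 !mul0r subrr ltxx.
pose xi := (u0*a0 + u1*a1)/(u0*s0+u1*s1).
pose p0 := a0 - xi*s0. pose p1 := a1 - xi*s1. pose p2 := a2 - xi*s2.
pose q0 := b0 - xi*r0. pose q1 := b1 - xi*r1. pose q2 := b2 - xi*r2.
pose d := u0*v1 - u1*v0.
pose k : R := (u0* p1 - u1* p0)/(u0^+2+u1^+2).
have Hup : u0* p0 + u1* p1 = 0 by rewrite /p0 /p1 /xi; field.
have Hvq : v0*q0 + v1*q1 = 0.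
  have -> : v0*q0+v1*q1 = -((v0*r0+v1*r1)*(u0*a0+u1*a1) - (u0*s0+u1*s1)*(v0*b0+v1*b1))/(u0*s0+u1*s1).
    by rewrite /q0 /q1 /xi; field.
  by rewrite C2 oppr0 mul0r.
have Hpq : v0* p0 + v1* p1 + (u0*q0 + u1*q1) = 0.
  have -> : v0* p0 + v1* p1 + (u0*q0 + u1*q1) =
     (v0*a0+v1*a1+(u0*b0+u1*b1)) - xi * (u0*r0+u1*r1+(v0*s0+v1*s1)).
    by rewrite /p0 /p1 /q0 /q1; ring.
  by rewrite C1 F4; ring.
have Hp0 : p0 = - k * u1.
  have -> : - k * u1 = p0 - u0 * (u0* p0 + u1* p1)/(u0^+2+u1^+2) by rewrite /k; field.
  by rewrite Hup mulr0 mul0r subr0.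
have Hp1 : p1 = k * u0.
  have -> : k * u0 = p1 - u1 * (u0* p0 + u1* p1)/(u0^+2+u1^+2) by rewrite /k; field.
  by rewrite Hup mulr0 mul0r subr0.
have Huq : u0*q0 + u1*q1 = - (k * (u0*v1 - u1*v0)).
  have -> : u0*q0 + u1*q1 = (v0* p0 + v1* p1 + (u0*q0 + u1*q1)) - (v0* p0 + v1* p1) by ring.
  by rewrite Hpq Hp0 Hp1; ring.
have Hq0 : q0 = - k * v1.
  apply: (mulIf d0).
  have -> : q0 * (u0*v1 - u1*v0) = v1*(u0*q0+u1*q1) - u1*(v0*q0+v1*q1) by ring.
  by rewrite Huq Hvq; ring.
have Hq1 : q1 = k * v0.
  apply: (mulIf d0).
  have -> : q1 * (u0*v1 - u1*v0) = u0*(v0*q0+v1*q1) - v0*(u0*q0+u1*q1) by ring.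
  by rewrite Huq Hvq; ring.
exists ((u0*q2 - v0* p2)/d), ((u1*q2 - v1* p2)/d), k, xi.
split; split.
- by move: Hp0; rewrite /p0 => /eqP; rewrite subr_eq => /eqP ->; ring.
- by move: Hp1; rewrite /p1 => /eqP; rewrite subr_eq => /eqP ->; ring.
- have -> : (u0*q2 - v0* p2)/d*u1 - (u1*q2 - v1* p2)/d*u0 = p2 by rewrite /d; field.
  by rewrite /p2; ring.
- by move: Hq0; rewrite /q0 => /eqP; rewrite subr_eq => /eqP ->; ring.
- by move: Hq1; rewrite /q1 => /eqP; rewrite subr_eq => /eqP ->; ring.
- have -> : (u0*q2 - v0* p2)/d*v1 - (u1*q2 - v1* p2)/d*v0 = q2 by rewrite /d; field.
  by rewrite /q2; ring.
Qed.
Lemma derive_dotv (n : nat) (f g : R -> 'cV[R]_n) (x : R) :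
  derivable f x 1 -> derivable g x 1 ->
  'D_1 (fun s => dotv (f s) (g s)) x = dotv (f x) ('D_1 g x) + dotv (g x) ('D_1 f x).
Proof.
move=> df dg.
have dfi : forall i, derivable (fun s => f s i 0) x 1 by move=> i; exact: (proj1 (derivable_mxP _ _ _) df).
have dgi : forall i, derivable (fun s => g s i 0) x 1 by move=> i; exact: (proj1 (derivable_mxP _ _ _) dg).
have -> : (fun s => dotv (f s) (g s)) = \sum_(i < n) ((fun s => f s i 0) * (fun s => g s i 0)).
  by rewrite fct_sumE; apply/funext => s; rewrite /dotv.
rewrite derive_sum; last by move=> i; apply: derivableM.
rewrite /dotv -big_split /=; apply: eq_bigr => i _.
rewrite deriveM // (derive_mx df) (derive_mx dg) !mxE.
by rewrite /GRing.scale /= addrC.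
Qed.
Lemma crossE (a b : 'cV[R]_3) :
  [/\ cross a b 0 0 = a 1 0 * b 2 0 - a 2 0 * b 1 0,
      cross a b 1 0 = a 2 0 * b 0 0 - a 0 0 * b 2 0 &
      cross a b 2 0 = a 0 0 * b 1 0 - a 1 0 * b 0 0].
Proof. by rewrite !mxE. Qed.
Lemma eqv3 (x y : 'cV[R]_3) : x 0 0 = y 0 0 -> x 1 0 = y 1 0 -> x 2 0 = y 2 0 -> x = y.
Proof.
move=> h0 h1 h2; apply/matrixP => i j; rewrite ord1.
case: i => [[|[|[|k]]] Hi] //.
- by rewrite (_ : Ordinal Hi = 0) //; apply/val_inj.
- by rewrite (_ : Ordinal Hi = 1) //; apply/val_inj.
- by rewrite (_ : Ordinal Hi = 2) //; apply/val_inj.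
Qed.
Lemma core_vec (u v u' v' a b : 'cV[R]_3) :
 u 2 0 = 0 -> v 2 0 = 0 -> 0 < u 0 0 * v 1 0 - u 1 0 * v 0 0 ->
 dotv u u' != 0 -> dotv v v' != 0 -> dotv u v' + dotv v u' = 0 ->
 (dotv v a + dotv u b = 0 /\ dotv v v' * dotv u a - dotv u u' * dotv v b = 0) <->
 exists w xi, a = cross w u + xi *: u' /\ b = cross w v + xi *: v'.
Proof.
move=> hu hv hd huu hvv F4; split.
- move=> [C1 C2].
  have h1 : u 0 0 * u' 0 0 + u 1 0 * u' 1 0 != 0 by move: huu; rewrite dotvE hu mul0r addr0.
  have h2 : v 0 0 * v' 0 0 + v 1 0 * v' 1 0 != 0 by move: hvv; rewrite dotvE hv mul0r addr0.
  have h3 := F4; rewrite !dotvE hu hv !mul0r !addr0 in h3.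
  have h4 := C1; rewrite !dotvE hu hv !mul0r !addr0 in h4.
  have h5 := C2; rewrite !dotvE hu hv !mul0r !addr0 in h5.
  have [w0 [w1 [w2 [xi [[e1 e2 e3] [e4 e5 e6]]]]]] := @core_R (u 0 0) (u 1 0) (v 0 0) (v 1 0) (u' 0 0) (u' 1 0) (u' 2 0) (v' 0 0) (v' 1 0) (v' 2 0) (a 0 0) (a 1 0) (a 2 0) (b 0 0) (b 1 0) (b 2 0) hd h1 h2 h3 h4 h5.
  exists (\col_(i < 3) (if i == 0 :> nat then w0 else if i == 1 :> nat then w1 else w2)), xi.
  by split; apply: eqv3; rewrite !mxE /= ?hu ?hv.
- move=> [w [xi [-> ->]]]; split.
  + transitivity (xi * (dotv u v' + dotv v u')); last by rewrite F4 mulr0.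
    rewrite !dotvE !mxE /= hu hv; ring.
  + rewrite !dotvE !mxE /= hu hv; ring.
Qed.
End S.

Theorem lemmaB2 (R : realType) (thm thp : R) (t : 'I_4 -> R -> 'cV[R]_3)
  (Hmech : origami_mechanism thm thp t)
  (Q : 'M[R]_3) (HQ : is_SO3 Q) (th : R) (Hth : thm < th < thp)
  (A : 'M[R]_(3, 2)) :
  (frob (L1 Q t th) A = 0 /\ frob (L2 Q t th) A = 0) <->
  exists (w : 'cV[R]_3) (xi : R),
    A *m et R 0 = Q *m (cross w (uvec t th) + xi *: derive1 (uvec t) th) /\
    A *m et R 1 = Q *m (cross w (vvec t th) + xi *: derive1 (vvec t) th).
Proof.
case: Hmech => _ Hder Hrig Hperp Hnz.
have Hin : in_int thm thp th by exact: Hth.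
have [Hu3 Hv3 Hd] := Hperp th Hin.
have [Huu Hvv] := Hnz th Hin.
have du : forall s, in_int thm thp s -> derivable (uvec t) s 1.
  move=> s hs; rewrite (_ : uvec t = t 0 - t 2); last by apply/funext.
  by apply: derivableB; apply: Hder.
have dv : forall s, in_int thm thp s -> derivable (vvec t) s 1.
  move=> s hs; rewrite (_ : vvec t = t 1 - t 3); last by apply/funext.
  by apply: derivableB; apply: Hder.
have F4 : dotv (uvec t th) (derive1 (vvec t) th) + dotv (vvec t th) (derive1 (uvec t) th) = 0.
  rewrite !derive1E -(@derive_dotv _ _ (uvec t) (vvec t)); [|exact: du|exact: dv].
  rewrite (@near_eq_derive _ _ _ _ (cst (dotv (uvec t th) (vvec t th)))) ?derive_cst //.
  have : th \in `]thm, thp[ by rewrite in_itv /=.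
  move=> /near_in_itvoo; apply: filterS => s; rewrite in_itv /= => hs.
  have K := fun i => (Hrig i s th hs Hin).
  rewrite /uvec /vvec !dotvBl !dotvBr.
  case: o4 => o0 o1 o2 o3.
  have [_ k0] := K 0; have [_ k1] := K 1; have [_ k2] := K 2; have [_ k3] := K 3.
  rewrite o0 in k0; rewrite o1 in k1; rewrite o2 in k2; rewrite o3 in k3.
  rewrite (@dotvC _ _ (t 2 s) (t 1 s)) (@dotvC _ _ (t 2 th) (t 1 th)) k0 k1 k2.
  by rewrite (@dotvC _ _ (t 0 s) (t 3 s)) (@dotvC _ _ (t 0 th) (t 3 th)) k3.
have EL1 : frob (L1 Q t th) A =
    dotv (vvec t th) (Q^T *m A *m et R 0) + dotv (uvec t th) (Q^T *m A *m et R 1).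
  by rewrite /L1 frob_mul frobDl !frob_tens.
have EL2 : frob (L2 Q t th) A =
    dotv (vvec t th) (derive1 (vvec t) th) * dotv (uvec t th) (Q^T *m A *m et R 0)
    - dotv (uvec t th) (derive1 (uvec t) th) * dotv (vvec t th) (Q^T *m A *m et R 1).
  by rewrite /L2 frob_mul frobBl !frobZl !frob_tens.
have Hu3' : uvec t th 2 0 = 0 by rewrite -dot_e3.
have Hv3' : vvec t th 2 0 = 0 by rewrite -dot_e3.
have Hd' : 0 < uvec t th 0 0 * vvec t th 1 0 - uvec t th 1 0 * vvec t th 0 0.
  by move: Hd; rewrite dotvC dot_e3; case: (@crossE _ (uvec t th) (vvec t th)) => _ _ ->.
have Huu' : dotv (uvec t th) (derive1 (uvec t) th) != 0 by rewrite dotvC.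
have Hvv' : dotv (vvec t th) (derive1 (vvec t) th) != 0 by rewrite dotvC.
rewrite EL1 EL2 (core_vec _ _ _ _ _ _ _ Hu3' Hv3' Hd' Huu' Hvv' F4).
have QQt : Q *m Q^T = 1%:M by apply: mulmx1C; case: HQ.
have tr : forall (i : 'I_2) c, (Q^T *m A *m et R i = c) <-> (A *m et R i = Q *m c).
  move=> i c; split => [<-|h]; first by rewrite !mulmxA QQt mul1mx.
  by rewrite -mulmxA h mulmxA (proj1 HQ) mul1mx.
split => -[w [xi [h1 h2]]]; exists w, xi; split.
- exact: (proj1 (tr 0 _) h1).
- exact: (proj1 (tr 1 _) h2).
- exact: (proj2 (tr 0 _) h1).
- exact: (proj2 (tr 1 _) h2).
Qed.
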